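(* Let $\mathbb{E}$ be a finitely complete category, $\Sigma$ a fibrational class of split epimorphisms, and suppose $\mathbb{E}$ is a $\Sigma$-Mal'tsev category. Then $\mathbb{E}$ is action distinctive if and only if every $\Sigma$-equivalence relation $S$ on an object $X$ admits a centralizer.
   Context: A split epimorphism is a pair $(f,s)$ with $fs=1$. A class $\Sigma$ of split epimorphisms is fibrational if it contains all split epimorphisms $(f,s)$ with $f$ invertible and is stable under pullback along any morphism. A pair of morphisms with common codomain $Z$ is jointly extremally epic if it factors jointly through no non-invertible monomorphism into $Z$. $\mathbb{E}$ is $\Sigma$-Mal'tsev if for every split epimorphism $(f,s)\colon X\rightleftarrows Y$ in $\Sigma$ and every split epimorphism $(g,t)$ with $g\colon Y'\to Y$, letting $X'=Y'\times_YX$, $s'=(1_{Y'},sg)$, $\bar t=(tf,1_X)$, the pair $(s',\bar t)$ is jointly extremally epic. A $\Sigma$-relation is a reflexive relation $(d_0,d_1)\colon S\rightarrowtail X\times X$ with reflexivity $s_0$ such that $(d_0,s_0)\in\Sigma$; a $\Sigma$-equivalence relation is an equivalence relation which is a $\Sigma$-relation. The kernel relation of $f$ is denoted $R[f]$. A split epimorphism $(f,s)$ is $\Sigma$-special when $R[f]$ is a $\Sigma$-relation. For reflexive relations $R,S$ on $X$, $R\times_XS$ is the pullback of $d_0^S$ along $d_1^R$ (elements $xRySz$), $\sigma_0^R\colon R\to R\times_XS$, $xRy\mapsto xRySy$, $\sigma_0^S\colon S\to R\times_XS$, $ySz\mapsto yRySz$; $[R,S]=0$ means there is $p\colon R\times_XS\to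 X$ with $p\sigma_0^R=d_0^R$, $p\sigma_0^S=d_1^S$. The centralizer of a $\Sigma$-equivalence relation $S$ on $X$ is the largest equivalence relation $R$ on $X$ with $[R,S]=0$. A cartesian equivalence relation on a split epimorphism $(f,s)\colon X\rightleftarrows Y$ consists of equivalence relations $R_X$ on $X$ and $R_Y$ on $Y$ and a split epimorphism $(R_f,R_s)\colon R_X\rightleftarrows R_Y$ commuting with both projections $d_0,d_1$ and the reflexivity maps (so that it is an equivalence relation on $(f,s)$ in the category of split epimorphisms), such that for $i=0,1$ the square formed by $d_i^X\colon R_X\to X$, $d_i^Y\colon R_Y\to Y$, $R_f$ and $f$ is a pullback. $\mathbb{E}$ is action distinctive when, on every $\Sigma$-special split epimorphism $(f,s)$, there exists a largest (for inclusion) cartesian equivalence relation. *)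

(* Defs.v *)
Record Category := {
  Ob :> Type;
  Hom : Ob -> Ob -> Type;
  idm : forall a, Hom a a;
  comp : forall {a b c}, Hom b c -> Hom a b -> Hom a c;
  comp_id_l : forall a b (f : Hom a b), comp (idm b) f = f;
  comp_id_r : forall a b (f : Hom a b), comp f (idm a) = f;
  comp_assoc : forall a b c d (h : Hom c d) (g : Hom b c) (f : Hom a b),
      comp h (comp g f) = comp (comp h g) f
}.

Arguments Hom {C} a b : rename.
Arguments idm {C} a : rename.
Arguments comp {C a b c} g f : rename.

Declare Scope cat_scope.
Notation "g ∘ f" := (comp g f) (at level 40, left associativity) : cat_scope.
Open Scope cat_scope.

Section Cat.
Context {C : Category}.

Definition IsIso {A B : C} (f : Hom A B) : Prop :=
  exists g : Hom B A, g ∘ f = idm A /\ f ∘ g = idm B.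

Definition Mono {A B : C} (f : Hom A B) : Prop :=
  forall (Z : C) (u v : Hom Z A), f ∘ u = f ∘ v -> u = v.

Definition IsTerminal (T : C) : Prop :=
  forall A : C, exists! h : Hom A T, True.

Definition IsPullback {A B Z : C} (f : Hom A Z) (g : Hom B Z)
    (P : C) (p1 : Hom P A) (p2 : Hom P B) : Prop :=
  f ∘ p1 = g ∘ p2 /\
  forall (Q : C) (q1 : Hom Q A) (q2 : Hom Q B), f ∘ q1 = g ∘ q2 ->
    exists! u : Hom Q P, p1 ∘ u = q1 /\ p2 ∘ u = q2.

Definition FinitelyComplete : Prop :=
  (exists T : C, IsTerminal T) /\
  forall (A B Z : C) (f : Hom A Z) (g : Hom B Z),
    exists (P : C) (p1 : Hom P A) (p2 : Hom P B), IsPullback f g P p1 p2.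

Definition SplitClass : Type := forall X Y : C, Hom X Y -> Hom Y X -> Prop.

Definition Fibrational (Sigma : SplitClass) : Prop :=
  (forall X Y (f : Hom X Y) (s : Hom Y X), Sigma X Y f s -> f ∘ s = idm Y) /\
  (forall X Y (f : Hom X Y) (s : Hom Y X), f ∘ s = idm Y -> IsIso f -> Sigma X Y f s) /\
  (forall X Y (f : Hom X Y) (s : Hom Y X) Y' (g : Hom Y' Y)
          X' (f' : Hom X' Y') (g' : Hom X' X) (s' : Hom Y' X'),
      Sigma X Y f s -> IsPullback g f X' f' g' ->
      f' ∘ s' = idm Y' -> g' ∘ s' = s ∘ g -> Sigma X' Y' f' s').

Definition JointlyExtrEpic {A B Z : C} (a : Hom A Z) (b : Hom B Z) : Prop :=
  forall (M : C) (m : Hom M Z) (a' : Hom A M) (b' : Hom B M),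
    Mono m -> m ∘ a' = a -> m ∘ b' = b -> IsIso m.

(* X' = Y' x_Y X with projections f' : X' -> Y', g' : X' -> X;
   s' = (1, s g), tbar = (t f, 1) *)
Definition SigmaMaltsev (Sigma : SplitClass) : Prop :=
  forall X Y (f : Hom X Y) (s : Hom Y X) Y' (g : Hom Y' Y) (t : Hom Y Y')
         X' (f' : Hom X' Y') (g' : Hom X' X),
    Sigma X Y f s -> g ∘ t = idm Y -> IsPullback g f X' f' g' ->
    forall (s' : Hom Y' X') (tbar : Hom X X'),
      f' ∘ s' = idm Y' -> g' ∘ s' = s ∘ g ->
      f' ∘ tbar = t ∘ f -> g' ∘ tbar = idm X ->
      JointlyExtrEpic s' tbar.

(* A relation S >-> X x X is a jointly monic pair (d0, d1);
   a reflexive relation comes with its reflexivity s0. *)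
Record RRel (X : C) := mkRRel {
  rob : C;
  rd0 : Hom rob X;
  rd1 : Hom rob X;
  rs0 : Hom X rob
}.
Arguments rob {X} r.
Arguments rd0 {X} r.
Arguments rd1 {X} r.
Arguments rs0 {X} r.

Definition JointlyMonic {S X : C} (d0 d1 : Hom S X) : Prop :=
  forall (Z : C) (u v : Hom Z S), d0 ∘ u = d0 ∘ v -> d1 ∘ u = d1 ∘ v -> u = v.

Definition IsReflRel {X : C} (R : RRel X) : Prop :=
  JointlyMonic (rd0 R) (rd1 R) /\
  rd0 R ∘ rs0 R = idm X /\ rd1 R ∘ rs0 R = idm X.

Definition IsEquivRel {X : C} (R : RRel X) : Prop :=
  IsReflRel R /\
  (exists sg : Hom (rob R) (rob R), rd0 R ∘ sg = rd1 R /\ rd1 R ∘ sg = rd0 R) /\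
  (forall (P : C) (p1 p2 : Hom P (rob R)), IsPullback (rd1 R) (rd0 R) P p1 p2 ->
     exists tau : Hom P (rob R), rd0 R ∘ tau = rd0 R ∘ p1 /\ rd1 R ∘ tau = rd1 R ∘ p2).

Definition SigmaRel (Sigma : SplitClass) {X : C} (R : RRel X) : Prop :=
  IsReflRel R /\ Sigma (rob R) X (rd0 R) (rs0 R).

Definition SigmaEquivRel (Sigma : SplitClass) {X : C} (R : RRel X) : Prop :=
  IsEquivRel R /\ Sigma (rob R) X (rd0 R) (rs0 R).

Definition RelIncl {X : C} (R R' : RRel X) : Prop :=
  exists h : Hom (rob R) (rob R'), rd0 R' ∘ h = rd0 R /\ rd1 R' ∘ h = rd1 R.

(* [R, S] = 0 : R x_X S is the pullback of d0^S along d1^R (p1 to R, p2 to S);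
   sigma0^R : R -> R x_X S is the map with components (1, s0^S d1^R),
   sigma0^S : S -> R x_X S the map with components (s0^R d0^S, 1). *)
Definition Centralize {X : C} (R S : RRel X) : Prop :=
  forall (P : C) (p1 : Hom P (rob R)) (p2 : Hom P (rob S)),
    IsPullback (rd1 R) (rd0 S) P p1 p2 ->
    exists p : Hom P X,
      (forall u : Hom (rob R) P,
          p1 ∘ u = idm (rob R) -> p2 ∘ u = rs0 S ∘ rd1 R -> p ∘ u = rd0 R) /\
      (forall v : Hom (rob S) P,
          p1 ∘ v = rs0 R ∘ rd0 S -> p2 ∘ v = idm (rob S) -> p ∘ v = rd1 S).

Definition IsCentralizer {X : C} (S R : RRel X) : Prop :=
  IsEquivRel R /\ Centralize R S /\
  forall R' : RRel X, IsEquivRel R' -> Centralize R' S -> RelIncl R' R.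

Definition HasCentralizer {X : C} (S : RRel X) : Prop :=
  exists R : RRel X, IsCentralizer S R.

Definition IsKernelRel {X Y : C} (f : Hom X Y) (R : RRel X) : Prop :=
  IsPullback f f (rob R) (rd0 R) (rd1 R) /\
  rd0 R ∘ rs0 R = idm X /\ rd1 R ∘ rs0 R = idm X.

Definition SigmaSpecial (Sigma : SplitClass) {X Y : C} (f : Hom X Y) (s : Hom Y X) : Prop :=
  f ∘ s = idm Y /\ forall R : RRel X, IsKernelRel f R -> SigmaRel Sigma R.

Definition IsCartEq {X Y : C} (f : Hom X Y) (s : Hom Y X)
    (RX : RRel X) (RY : RRel Y) (Rf : Hom (rob RX) (rob RY)) (Rs : Hom (rob RY) (rob RX)) : Prop :=
  IsEquivRel RX /\ IsEquivRel RY /\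
  Rf ∘ Rs = idm (rob RY) /\
  rd0 RY ∘ Rf = f ∘ rd0 RX /\ rd1 RY ∘ Rf = f ∘ rd1 RX /\
  rd0 RX ∘ Rs = s ∘ rd0 RY /\ rd1 RX ∘ Rs = s ∘ rd1 RY /\
  Rf ∘ rs0 RX = rs0 RY ∘ f /\ Rs ∘ rs0 RY = rs0 RX ∘ s /\
  IsPullback f (rd0 RY) (rob RX) (rd0 RX) Rf /\
  IsPullback f (rd1 RY) (rob RX) (rd1 RX) Rf.

Definition HasLargestCartEq {X Y : C} (f : Hom X Y) (s : Hom Y X) : Prop :=
  exists (RX : RRel X) (RY : RRel Y) (Rf : Hom (rob RX) (rob RY)) (Rs : Hom (rob RY) (rob RX)),
    IsCartEq f s RX RY Rf Rs /\
    forall (RX' : RRel X) (RY' : RRel Y) (Rf' : Hom (rob RX') (rob RY'))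
           (Rs' : Hom (rob RY') (rob RX')),
      IsCartEq f s RX' RY' Rf' Rs' -> RelIncl RX' RX /\ RelIncl RY' RY.

Definition ActionDistinctive (Sigma : SplitClass) : Prop :=
  forall (X Y : C) (f : Hom X Y) (s : Hom Y X),
    SigmaSpecial Sigma f s -> HasLargestCartEq f s.

End Cat.

(* Main.v *)
Require Import Defs.

Arguments rob {C X} r.
Arguments rd0 {C X} r.
Arguments rd1 {C X} r.
Arguments rs0 {C X} r.

Section Basics.
Context {C : Category}.

Lemma asc {a b c d : C} (h : Hom c d) (g : Hom b c) (f : Hom a b) : h ∘ (g ∘ f) = (h ∘ g) ∘ f.
Proof. apply comp_assoc. Qed.
Lemma idl {a b : C} (f : Hom a b) : idm b ∘ f = f. Proof. apply comp_id_l. Qed.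
Lemma idr {a b : C} (f : Hom a b) : f ∘ idm a = f. Proof. apply comp_id_r. Qed.

Lemma rwr {a b c : C} {f : Hom b c} {g : Hom a b} {h : Hom a c} :
  f ∘ g = h -> forall z (x : Hom z a), f ∘ (g ∘ x) = h ∘ x.
Proof. intros H z x. rewrite asc, H. reflexivity. Qed.

Lemma rwr3 {a b c d : C} {f : Hom c d} {g : Hom b c} {k : Hom a b} {h : Hom a d} :
  f ∘ (g ∘ k) = h -> forall z (x : Hom z a), f ∘ (g ∘ (k ∘ x)) = h ∘ x.
Proof. intros H z x. rewrite (asc g k x), asc, H. reflexivity. Qed.

Lemma cpL {a b c : C} (f : Hom b c) {g h : Hom a b} : g = h -> f ∘ g = f ∘ h.
Proof. intros ->; reflexivity. Qed.
Lemma cpR {a b c : C} (f : Hom a b) {g h : Hom b c} : g = h -> g ∘ f = h ∘ f.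
Proof. intros ->; reflexivity. Qed.

End Basics.

Ltac ra := repeat rewrite <- asc; rewrite ?idl, ?idr.

Section PB.
Context {C : Category}.

Lemma pb_jm {A B Z P : C} {f : Hom A Z} {g : Hom B Z} {p1 : Hom P A} {p2 : Hom P B} :
  IsPullback f g P p1 p2 -> forall Q (u v : Hom Q P), p1 ∘ u = p1 ∘ v -> p2 ∘ u = p2 ∘ v -> u = v.
Proof.
  intros [Hc Hu] Q u v H1 H2.
  destruct (Hu Q (p1 ∘ v) (p2 ∘ v)) as [w [_ Hw]].
  { rewrite !asc, Hc. reflexivity. }
  rewrite <- (Hw u (conj H1 H2)). apply Hw. split; reflexivity.
Qed.

Lemma pb_ex {A B Z P : C} {f : Hom A Z} {g : Hom B Z} {p1 : Hom P A} {p2 : Hom P B} :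
  IsPullback f g P p1 p2 -> forall Q (q1 : Hom Q A) (q2 : Hom Q B), f ∘ q1 = g ∘ q2 ->
  exists u, p1 ∘ u = q1 /\ p2 ∘ u = q2.
Proof. intros [Hc Hu] Q q1 q2 H. destruct (Hu Q q1 q2 H) as [w [Hw _]]. eauto. Qed.

Lemma pb_comm {A B Z P : C} {f : Hom A Z} {g : Hom B Z} {p1 : Hom P A} {p2 : Hom P B} :
  IsPullback f g P p1 p2 -> f ∘ p1 = g ∘ p2.
Proof. intros [H _]; exact H. Qed.

Lemma pb_intro {A B Z P : C} {f : Hom A Z} {g : Hom B Z} {p1 : Hom P A} {p2 : Hom P B} :
  f ∘ p1 = g ∘ p2 ->
  (forall Q (q1 : Hom Q A) (q2 : Hom Q B), f ∘ q1 = g ∘ q2 -> exists u, p1 ∘ u = q1 /\ p2 ∘ u = q2) ->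
  (forall Q (u v : Hom Q P), p1 ∘ u = p1 ∘ v -> p2 ∘ u = p2 ∘ v -> u = v) ->
  IsPullback f g P p1 p2.
Proof.
  intros Hc He Hj. split; auto. intros Q q1 q2 H.
  destruct (He Q q1 q2 H) as [u [H1 H2]]. exists u. split; auto.
  intros v [H3 H4]. apply Hj; congruence.
Qed.

Hypothesis FC : @FinitelyComplete C.

Lemma pb_get {A B Z : C} (f : Hom A Z) (g : Hom B Z) :
  exists P (p1 : Hom P A) (p2 : Hom P B), IsPullback f g P p1 p2.
Proof. apply FC. Qed.

Lemma prod_ex (A B : C) : exists P (p1 : Hom P A) (p2 : Hom P B),
  (forall Q (q1 : Hom Q A) (q2 : Hom Q B), exists u, p1 ∘ u = q1 /\ p2 ∘ u = q2) /\
  (forall Q (u v : Hom Q P), p1 ∘ u = p1 ∘ v -> p2 ∘ u = p2 ∘ v -> u = v).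
Proof.
  destruct FC as [[T HT] _].
  destruct (HT A) as [tA [_ _]]. destruct (HT B) as [tB [_ _]].
  destruct (pb_get tA tB) as [P [p1 [p2 Hp]]].
  assert (Hu : forall Q (x y : Hom Q T), x = y).
  { intros Q x y. destruct (HT Q) as [t [_ Ht]].
    rewrite <- (Ht x I). apply Ht; exact I. }
  exists P, p1, p2. split.
  - intros Q q1 q2. apply (pb_ex Hp). apply Hu.
  - apply (pb_jm Hp).
Qed.

Lemma eq_ex {A Z : C} (u v : Hom A Z) : exists E (e : Hom E A),
  u ∘ e = v ∘ e /\ Mono e /\ forall Q (q : Hom Q A), u ∘ q = v ∘ q -> exists w, e ∘ w = q.
Proof.
  destruct (prod_ex A Z) as [P [p1 [p2 [Pe Pj]]]].
  destruct (Pe A (idm A) u) as [a [Ha1 Ha2]].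
  destruct (Pe A (idm A) v) as [b [Hb1 Hb2]].
  destruct (pb_get a b) as [E [e1 [e2 He]]].
  assert (E12 : e1 = e2).
  { pose proof (pb_comm He) as Hc. pose proof (cpL p1 Hc) as H.
    rewrite !asc, Ha1, Hb1, !idl in H. exact H. }
  exists E, e1. split; [|split].
  - pose proof (cpL p2 (pb_comm He)) as H. rewrite !asc, Ha2, Hb2 in H.
    rewrite H, E12. reflexivity.
  - intros Q x y Hxy. apply (pb_jm He); auto. rewrite <- E12. exact Hxy.
  - intros Q q Hq. destruct (pb_ex He Q q q) as [w [Hw1 Hw2]].
    + apply Pj; rewrite !asc; [rewrite Ha1, Hb1 | rewrite Ha2, Hb2]; rewrite ?idl; auto.
    + exists w; exact Hw1.
Qed.

End PB.

Section Mal.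
Context {C : Category} (Sigma : @SplitClass C).
Hypothesis FC : @FinitelyComplete C.
Hypothesis MS : SigmaMaltsev Sigma.

Section Setup.
Context {X Y Y' X' : C} (f : Hom X Y) (s : Hom Y X) (g : Hom Y' Y) (t : Hom Y Y')
  (f' : Hom X' Y') (g' : Hom X' X) (s' : Hom Y' X') (tb : Hom X X').
Hypotheses (HS : Sigma X Y f s) (Hgt : g ∘ t = idm Y) (Hpb : IsPullback g f X' f' g')
  (E1 : f' ∘ s' = idm Y') (E2 : g' ∘ s' = s ∘ g) (E3 : f' ∘ tb = t ∘ f) (E4 : g' ∘ tb = idm X).

Lemma mal_je : JointlyExtrEpic s' tb.
Proof. eapply MS; eauto. Qed.

Lemma mal_epi : forall Z (u v : Hom X' Z), u ∘ s' = v ∘ s' -> u ∘ tb = v ∘ tb -> u = v.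
Proof.
  intros Z u v H1 H2.
  destruct (eq_ex FC u v) as [E [e [He [Hm Hf]]]].
  destruct (Hf _ s' H1) as [w1 Hw1]. destruct (Hf _ tb H2) as [w2 Hw2].
  destruct (mal_je E e w1 w2 Hm Hw1 Hw2) as [k [Hk1 Hk2]].
  rewrite <- (idr u), <- (idr v), <- Hk2, !asc, He. reflexivity.
Qed.

Lemma mal_fact : forall X0 S0 (d0 d1 : Hom S0 X0), JointlyMonic d0 d1 ->
  forall (a b : Hom X' X0),
  (exists k1, d0 ∘ k1 = a ∘ s' /\ d1 ∘ k1 = b ∘ s') ->
  (exists k2, d0 ∘ k2 = a ∘ tb /\ d1 ∘ k2 = b ∘ tb) ->
  exists th, d0 ∘ th = a /\ d1 ∘ th = b.
Proof.
  intros X0 S0 d0 d1 Hjm a b [k1 [K11 K12]] [k2 [K21 K22]].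
  destruct (pb_get FC d0 a) as [M1 [ms [mp Hm1]]].
  destruct (eq_ex FC (d1 ∘ ms) (b ∘ mp)) as [E [e [He [Hmo Hf]]]].
  assert (Mono (mp ∘ e)) as Hmono.
  { intros Q x y Hxy. rewrite <- !asc in Hxy. apply Hmo. apply (pb_jm Hm1).
    - apply Hjm.
      + rewrite !asc, (pb_comm Hm1), <- !asc, Hxy. reflexivity.
      + pose proof (cpR x He) as H1. pose proof (cpR y He) as H2.
        rewrite <- !asc in H1, H2. rewrite !asc. rewrite <- !asc, H1, H2, Hxy. reflexivity.
    - exact Hxy. }
  destruct (pb_ex Hm1 _ k1 s') as [x1 [X11 X12]]. { rewrite K11; reflexivity. }
  destruct (pb_ex Hm1 _ k2 tb) as [x2 [X21 X22]]. { rewrite K21; reflexivity. }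
  destruct (Hf _ x1) as [w1 Hw1]. { rewrite <- !asc, X11, X12, K12. reflexivity. }
  destruct (Hf _ x2) as [w2 Hw2]. { rewrite <- !asc, X21, X22, K22. reflexivity. }
  destruct (mal_je E (mp ∘ e) w1 w2 Hmono) as [k [Hk1 Hk2]].
  { rewrite <- asc, Hw1, X12; reflexivity. }
  { rewrite <- asc, Hw2, X22; reflexivity. }
  exists (ms ∘ (e ∘ k)). split.
  - rewrite asc, (pb_comm Hm1), <- asc, (asc mp e k), Hk2, idr. reflexivity.
  - rewrite !asc, He, <- (asc b mp e), <- asc, Hk2, idr. reflexivity.
Qed.

End Setup.
End Mal.

Section Rel.
Context {C : Category}.
Hypothesis FC : @FinitelyComplete C.

Lemma eq_sym {X : C} (R : RRel X) : IsEquivRel R ->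
  exists sg : Hom (rob R) (rob R), rd0 R ∘ sg = rd1 R /\ rd1 R ∘ sg = rd0 R.
Proof. intros [_ [H _]]; exact H. Qed.

Lemma eq_jm {X : C} (R : RRel X) : IsEquivRel R -> JointlyMonic (rd0 R) (rd1 R).
Proof. intros [[H _] _]; exact H. Qed.
Lemma eq_r0 {X : C} (R : RRel X) : IsEquivRel R -> rd0 R ∘ rs0 R = idm X.
Proof. intros [[_ [H _]] _]; exact H. Qed.
Lemma eq_r1 {X : C} (R : RRel X) : IsEquivRel R -> rd1 R ∘ rs0 R = idm X.
Proof. intros [[_ [_ H]] _]; exact H. Qed.

Lemma eq_trans_el {X : C} (R : RRel X) : IsEquivRel R ->
  forall T (a b : Hom T (rob R)), rd1 R ∘ a = rd0 R ∘ b ->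
  exists c, rd0 R ∘ c = rd0 R ∘ a /\ rd1 R ∘ c = rd1 R ∘ b.
Proof.
  intros HR T a b Hab. destruct HR as [_ [_ Ht]].
  destruct (pb_get FC (rd1 R) (rd0 R)) as [P [p1 [p2 Hp]]].
  destruct (Ht P p1 p2 Hp) as [tau [T1 T2]].
  destruct (pb_ex Hp T a b Hab) as [u [U1 U2]].
  exists (tau ∘ u). rewrite !asc, T1, T2, <- !asc, U1, U2. auto.
Qed.

Lemma sg_sg {X : C} (R : RRel X) (sg : Hom (rob R) (rob R)) : JointlyMonic (rd0 R) (rd1 R) ->
  rd0 R ∘ sg = rd1 R -> rd1 R ∘ sg = rd0 R -> sg ∘ sg = idm _.
Proof. intros J H0 H1. apply J; rewrite asc; [rewrite H0, H1|rewrite H1, H0]; rewrite idr; auto. Qed.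

Lemma sg_s0 {X : C} (R : RRel X) (sg : Hom (rob R) (rob R)) : IsReflRel R ->
  rd0 R ∘ sg = rd1 R -> rd1 R ∘ sg = rd0 R -> sg ∘ rs0 R = rs0 R.
Proof. intros [J [r0 r1]] H0 H1. apply J; rewrite asc; [rewrite H0|rewrite H1]; rewrite ?r0, ?r1; auto. Qed.

End Rel.

Section Conn.
Context {C : Category} (Sigma : @SplitClass C).
Hypothesis FC : @FinitelyComplete C.
Hypothesis MS : SigmaMaltsev Sigma.
Context {X : C} (R S : RRel X) (P : C) (p1 : Hom P (rob R)) (p2 : Hom P (rob S)) (p : Hom P X).
Hypotheses (HR : IsEquivRel R) (HSr : IsReflRel S) (HSs : Sigma (rob S) X (rd0 S) (rs0 S))
  (HP : IsPullback (rd1 R) (rd0 S) P p1 p2)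
  (HpR : forall u : Hom (rob R) P, p1 ∘ u = idm _ -> p2 ∘ u = rs0 S ∘ rd1 R -> p ∘ u = rd0 R)
  (HpS : forall v : Hom (rob S) P, p1 ∘ v = rs0 R ∘ rd0 S -> p2 ∘ v = idm _ -> p ∘ v = rd1 S).

Let JS : JointlyMonic (rd0 S) (rd1 S) := proj1 HSr.
Let S0 : rd0 S ∘ rs0 S = idm X := proj1 (proj2 HSr).
Let S1 : rd1 S ∘ rs0 S = idm X := proj2 (proj2 HSr).
Let R0 : rd0 R ∘ rs0 R = idm X := eq_r0 R HR.
Let R1 : rd1 R ∘ rs0 R = idm X := eq_r1 R HR.
Let JR : JointlyMonic (rd0 R) (rd1 R) := eq_jm R HR.

Lemma sigR_ex : exists u : Hom (rob R) P, p1 ∘ u = idm _ /\ p2 ∘ u = rs0 S ∘ rd1 R.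
Proof. apply (pb_ex HP). rewrite asc, S0, idl, idr. reflexivity. Qed.
Lemma sigS_ex : exists u : Hom (rob S) P, p1 ∘ u = rs0 R ∘ rd0 S /\ p2 ∘ u = idm _.
Proof. apply (pb_ex HP). rewrite asc, R1, idl, idr. reflexivity. Qed.

Lemma conn_epi : forall Z (u v : Hom P Z),
  (forall w, p1 ∘ w = idm _ -> p2 ∘ w = rs0 S ∘ rd1 R -> u ∘ w = v ∘ w) ->
  (forall w, p1 ∘ w = rs0 R ∘ rd0 S -> p2 ∘ w = idm _ -> u ∘ w = v ∘ w) -> u = v.
Proof.
  intros Z u v H1 H2. destruct sigR_ex as [a [A1 A2]]. destruct sigS_ex as [b [B1 B2]].
  apply (mal_epi Sigma FC MS (rd0 S) (rs0 S) (rd1 R) (rs0 R) p1 p2 a b); auto.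
Qed.

Lemma theta_ex : exists th : Hom P (rob S), rd0 S ∘ th = rd0 R ∘ p1 /\ rd1 S ∘ th = p.
Proof.
  destruct sigR_ex as [a [A1 A2]]. destruct sigS_ex as [b [B1 B2]].
  apply (mal_fact Sigma FC MS (rd0 S) (rs0 S) (rd1 R) (rs0 R) p1 p2 a b); auto.
  - exists (rs0 S ∘ rd0 R). rewrite asc, S0, idl, (asc (rd1 S)), S1, idl, <- asc, A1, idr.
    rewrite HpR; auto.
  - exists (idm _). rewrite <- asc, B1, asc, R0, idl, HpS, !idr; auto.
Qed.

Section Th.
Context (th : Hom P (rob S)) (T0 : rd0 S ∘ th = rd0 R ∘ p1) (T1 : rd1 S ∘ th = p).

Lemma th_sR : forall w, p1 ∘ w = idm _ -> p2 ∘ w = rs0 S ∘ rd1 R -> th ∘ w = rs0 S ∘ rd0 R.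
Proof.
  intros w W1 W2. apply JS; ra; rewrite ?(rwr T0), ?(rwr T1), ?(rwr S0), ?(rwr S1), ?idl; ra.
  - rewrite W1; ra; reflexivity.
  - apply HpR; auto.
Qed.

Lemma th_sS : forall w, p1 ∘ w = rs0 R ∘ rd0 S -> p2 ∘ w = idm _ -> th ∘ w = idm _.
Proof.
  intros w W1 W2. apply JS; ra; rewrite ?(rwr T0), ?(rwr T1), ?(rwr S0), ?(rwr S1); ra.
  - rewrite W1, asc, R0, idl; reflexivity.
  - apply HpS; auto.
Qed.

Context (sg : Hom (rob R) (rob R)) (G0 : rd0 R ∘ sg = rd1 R) (G1 : rd1 R ∘ sg = rd0 R).

Lemma connD : forall T (pi pi2 : Hom T P), p1 ∘ pi2 = sg ∘ (p1 ∘ pi) -> p2 ∘ pi2 = th ∘ pi ->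
  p ∘ pi2 = rd1 S ∘ (p2 ∘ pi).
Proof.
  destruct (pb_ex HP P (sg ∘ p1) th) as [k [K1 K2]].
  { rewrite asc, G1, T0. reflexivity. }
  assert (Hk : p ∘ k = rd1 S ∘ p2).
  { apply conn_epi.
    - intros w W1 W2. destruct sigR_ex as [a [A1 A2]].
      assert (E : k ∘ w = a ∘ sg).
      { apply (pb_jm HP); ra; rewrite ?(rwr K1), ?(rwr K2), ?(rwr A1), ?(rwr A2); ra; rewrite ?W1; ra; auto.
        rewrite th_sR; auto. rewrite G1. reflexivity. }
      ra. rewrite E, W2, asc, HpR, G0; auto. rewrite (rwr S1); ra; reflexivity.
    - intros w W1 W2. ra. rewrite W2, HpS; ra; auto.
      + rewrite (rwr K1); ra; rewrite W1, asc, (sg_s0 R sg (proj1 HR)); auto.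
      + rewrite (rwr K2), th_sS; auto. }
  intros T pi pi2 H1 H2.
  assert (pi2 = k ∘ pi) as ->.
  { apply (pb_jm HP); ra; rewrite ?(rwr K1), ?(rwr K2); ra; auto. }
  rewrite asc, Hk; ra; reflexivity.
Qed.


Lemma connE : forall T (r1 r2 r : Hom T (rob R)) (c : Hom T (rob S)) (pi po pr : Hom T P),
  rd1 R ∘ r1 = rd0 R ∘ r2 ->
  rd0 R ∘ r = rd0 R ∘ r1 -> rd1 R ∘ r = rd1 R ∘ r2 ->
  p1 ∘ pi = r2 -> p2 ∘ pi = c -> p1 ∘ po = r1 -> p2 ∘ po = th ∘ pi ->
  p1 ∘ pr = r -> p2 ∘ pr = c -> p ∘ po = p ∘ pr.
Proof.
  intros T r1 r2 r c pi po pr H12 Hr0 Hr1 Pi1 Pi2 Po1 Po2 Pr1 Pr2.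
  destruct (pb_get FC (rd1 R) (rd0 R)) as [R2 [q1 [q2 HR2]]].
  destruct ((proj2 (proj2 HR)) R2 q1 q2 HR2) as [tau [Ta0 Ta1]].
  destruct (pb_get FC (rd1 R ∘ q2) (rd0 S)) as [W [w1 [w2 HW]]].
  destruct (pb_ex HR2 X (rs0 R) (rs0 R)) as [t [Q1t Q2t]]. { rewrite R0, R1; auto. }
  assert (Hgt : (rd1 R ∘ q2) ∘ t = idm X). { rewrite <- asc, Q2t, R1; auto. }
  destruct (pb_ex HW R2 (idm _) (rs0 S ∘ (rd1 R ∘ q2))) as [sW [SW1 SW2]].
  { rewrite asc, S0, idl, idr; auto. }
  destruct (pb_ex HW (rob S) (t ∘ rd0 S) (idm _)) as [tW [TW1 TW2]].
  { rewrite asc, Hgt, idl, idr; auto. }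
  pose proof (pb_comm HW) as CW. pose proof (pb_comm HR2) as CR2. rewrite <- asc in CW.
  destruct (pb_ex HP W (q2 ∘ w1) w2) as [ai [Ai1 Ai2]]. { exact CW. }
  destruct (pb_ex HP W (q1 ∘ w1) (th ∘ ai)) as [ao [Ao1 Ao2]].
  { ra; rewrite (rwr CR2), (rwr T0); ra; rewrite Ai1; auto. }
  destruct (pb_ex HP W (tau ∘ w1) w2) as [ar [Ar1 Ar2]].
  { rewrite asc, Ta1; ra; auto. }
  destruct sigR_ex as [a [A1 A2]]. destruct sigS_ex as [b [B1 B2]].
  assert (Main : p ∘ ao = p ∘ ar).
  { apply (mal_epi Sigma FC MS (rd0 S) (rs0 S) (rd1 R ∘ q2) t w1 w2 sW tW); auto.
    - assert (E1 : ai ∘ sW = a ∘ q2).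
      { apply (pb_jm HP); ra; rewrite ?(rwr Ai1), ?(rwr Ai2), ?(rwr A1), ?(rwr A2); ra;
        rewrite ?SW1, ?SW2; ra; auto. }
      assert (E2 : ao ∘ sW = a ∘ q1).
      { apply (pb_jm HP); ra; rewrite ?(rwr Ao1), ?(rwr Ao2), ?(rwr A1), ?(rwr A2); ra;
        rewrite ?SW1, ?E1; ra; auto.
        rewrite asc, th_sR; auto. ra. rewrite CR2. auto. }
      assert (E3 : ar ∘ sW = a ∘ tau).
      { apply (pb_jm HP); ra; rewrite ?(rwr Ar1), ?(rwr Ar2), ?(rwr A1), ?(rwr A2); ra;
        rewrite ?SW1, ?SW2; ra; auto. rewrite Ta1. auto. }
      ra. rewrite E2, E3, !asc, !HpR; auto.
    - assert (E1 : ai ∘ tW = b).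
      { apply (pb_jm HP); ra; rewrite ?(rwr Ai1), ?(rwr Ai2), ?B1, ?B2; ra;
        rewrite ?TW1, ?TW2; ra; auto. rewrite (rwr Q2t). auto. }
      assert (E2 : ao ∘ tW = b).
      { apply (pb_jm HP); ra; rewrite ?(rwr Ao1), ?(rwr Ao2), ?B1, ?B2; ra;
        rewrite ?TW1, ?E1; ra; auto.
        rewrite (rwr Q1t). auto. apply th_sS; auto. }
      assert (Tt : tau ∘ t = rs0 R).
      { apply JR; ra; rewrite ?(rwr Ta0), ?(rwr Ta1); ra; rewrite ?Q1t, ?Q2t, ?R0, ?R1; auto. }
      assert (E3 : ar ∘ tW = b).
      { apply (pb_jm HP); ra; rewrite ?(rwr Ar1), ?(rwr Ar2), ?B1, ?B2; ra;
        rewrite ?TW1, ?TW2; ra; auto. rewrite (rwr Tt). auto. }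
      ra. rewrite E2, E3. auto. }
  destruct (pb_ex HR2 T r1 r2 H12) as [y [Y1 Y2]].
  destruct (pb_ex HW T y c) as [x [X1 X2]].
  { rewrite <- asc, Y2, <- Pi1, <- Pi2, !asc, (pb_comm HP). auto. }
  assert (Ei : pi = ai ∘ x).
  { apply (pb_jm HP); ra; rewrite ?(rwr Ai1), ?(rwr Ai2); ra; rewrite ?X1, ?X2; auto.
    rewrite Y2; auto. }
  assert (Eo : po = ao ∘ x).
  { apply (pb_jm HP); ra; rewrite ?(rwr Ao1), ?(rwr Ao2); ra; rewrite ?X1, ?Y1, <- ?Ei; auto. }
  assert (Er : pr = ar ∘ x).
  { apply (pb_jm HP); ra; rewrite ?(rwr Ar1), ?(rwr Ar2); ra; rewrite ?X1, ?X2; auto.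
    rewrite Pr1. apply JR; ra; rewrite ?(rwr Ta0), ?(rwr Ta1); ra; rewrite ?Y1, ?Y2; auto. }
  rewrite Eo, Er, !asc, Main. auto.
Qed.

End Th.
End Conn.

Section Act.
Context {C : Category}.
Hypothesis FC : @FinitelyComplete C.
Context {E B : C} (f : Hom E B) (s : Hom B E) (Hfs : f ∘ s = idm B).
Context (R : RRel B) (HR : IsEquivRel R) (sg : Hom (rob R) (rob R))
  (G0 : rd0 R ∘ sg = rd1 R) (G1 : rd1 R ∘ sg = rd0 R).
Context (Q : C) (q1 : Hom Q E) (q2 : Hom Q (rob R)) (HQ : IsPullback f (rd0 R) Q q1 q2).
Context (al : Hom Q E).
Hypotheses (Aa : f ∘ al = rd1 R ∘ q2)
  (Ab : forall u : Hom E Q, q1 ∘ u = idm _ -> q2 ∘ u = rs0 R ∘ f -> al ∘ u = idm _)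
  (Ac : forall u : Hom (rob R) Q, q1 ∘ u = s ∘ rd0 R -> q2 ∘ u = idm _ -> al ∘ u = s ∘ rd1 R)
  (Ad : forall T (x y : Hom T Q), q1 ∘ y = al ∘ x -> q2 ∘ y = sg ∘ (q2 ∘ x) -> al ∘ y = q1 ∘ x)
  (Ae : forall T (x y z : Hom T Q) (r : Hom T (rob R)), al ∘ x = q1 ∘ y -> q1 ∘ z = q1 ∘ x ->
          q2 ∘ z = r -> rd0 R ∘ r = rd0 R ∘ (q2 ∘ x) -> rd1 R ∘ r = rd1 R ∘ (q2 ∘ y) ->
          al ∘ z = al ∘ y).
Context (r0 : Hom E Q) (r0a : q1 ∘ r0 = idm _) (r0b : q2 ∘ r0 = rs0 R ∘ f).
Context (Rs : Hom (rob R) Q) (Rsa : q1 ∘ Rs = s ∘ rd0 R) (Rsb : q2 ∘ Rs = idm _).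

Let JR : JointlyMonic (rd0 R) (rd1 R) := eq_jm R HR.
Let CQ : f ∘ q1 = rd0 R ∘ q2 := pb_comm HQ.
Let SS : sg ∘ sg = idm _ := sg_sg R sg JR G0 G1.

Lemma q_jm : forall T (u v : Hom T Q), q1 ∘ u = q1 ∘ v -> al ∘ u = al ∘ v -> u = v.
Proof.
  intros T u v H1 H2. apply (pb_jm HQ); auto. apply JR.
  - rewrite !asc, <- CQ, <- !asc, H1. auto.
  - rewrite !asc, <- Aa, <- !asc, H2. auto.
Qed.

Lemma swap_ex : forall T (x : Hom T Q), exists y, q1 ∘ y = al ∘ x /\ q2 ∘ y = sg ∘ (q2 ∘ x).
Proof. intros T x. apply (pb_ex HQ). ra. rewrite (rwr Aa), (rwr G0). ra. auto. Qed.

Lemma act_cart : IsCartEq f s (mkRRel E Q q1 al r0) R q2 Rs.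
Proof.
  unfold IsCartEq, IsEquivRel, IsReflRel, JointlyMonic; cbn [rob rd0 rd1 rs0].
  split; [|split; [exact HR|]].
  { split; [split; [|split]|split].
    - intros T u v; apply q_jm.
    - exact r0a.
    - apply Ab; auto.
    - destruct (swap_ex Q (idm Q)) as [y [Y1 Y2]]. exists y. split.
      + rewrite Y1, idr. auto.
      + rewrite <- (idr q1). apply Ad. rewrite Y1. auto. rewrite Y2. auto.
    - intros P p1 p2 HP.
      destruct (eq_trans_el FC R HR P (q2 ∘ p1) (q2 ∘ p2)) as [r [Rr0 Rr1]].
      { rewrite (asc (rd1 R)), (asc (rd0 R)), <- Aa, <- CQ; ra; rewrite (pb_comm HP); auto. }
      destruct (pb_ex HQ P (q1 ∘ p1) r) as [z [Z1 Z2]].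
      { rewrite Rr0, asc, CQ. ra. auto. }
      exists z. split; auto. apply (Ae P p1 p2 z r); auto. exact (pb_comm HP). }
  split; [exact Rsb|]. split; [symmetry; exact CQ|]. split; [symmetry; exact Aa|].
  split; [exact Rsa|]. split; [apply Ac; auto|]. split; [exact r0b|].
  split.
  { apply (pb_jm HQ); ra; rewrite ?(rwr Rsa), ?(rwr Rsb), ?(rwr r0a), ?(rwr r0b); ra;
    rewrite ?(eq_r0 R HR), ?Hfs; ra; auto. }
  split; [exact HQ|].
  apply pb_intro.
  - exact Aa.
  - intros T w1 w2 Hw.
    destruct (pb_ex HQ T w1 (sg ∘ w2)) as [u0 [U1 U2]].
    { rewrite Hw, asc, G0. auto. }
    destruct (swap_ex T u0) as [y [Y1 Y2]].
    exists y. split.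
    + rewrite <- U1. apply Ad; auto.
    + rewrite Y2, U2, asc, SS, idl. auto.
  - intros T u v H1 H2.
    destruct (swap_ex T u) as [yu [Yu1 Yu2]]. destruct (swap_ex T v) as [yv [Yv1 Yv2]].
    assert (yu = yv).
    { apply (pb_jm HQ); [rewrite Yu1, Yv1|rewrite Yu2, Yv2, H2]; auto. }
    apply q_jm; auto.
    rewrite <- (Ad T u yu), <- (Ad T v yv); subst; auto.
Qed.

End Act.

Section Fwd.
Context {C : Category} (Sigma : @SplitClass C).
Hypothesis FC : @FinitelyComplete C.
Hypothesis Fib : Fibrational Sigma.
Hypothesis MS : SigmaMaltsev Sigma.

Lemma special_d0 {X : C} (S : RRel X) : SigmaEquivRel Sigma S -> SigmaSpecial Sigma (rd0 S) (rs0 S).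
Proof.
  intros [HS HSs]. pose proof (eq_jm S HS) as JS.
  destruct (eq_sym S HS) as [sg [G0 G1]].
  split; [apply (eq_r0 S HS)|].
  intros R [HK [K0 K1]].
  assert (JR : JointlyMonic (rd0 R) (rd1 R)) by (intros T u v; apply (pb_jm HK)).
  split; [split; auto|].
  destruct (eq_trans_el FC S HS _ (sg ∘ rd0 R) (rd1 R)) as [gg [Gg0 Gg1]].
  { rewrite asc, G1. exact (pb_comm HK). }
  rewrite asc, G0 in Gg0.
  destruct Fib as [_ [_ Fst]].
  apply (Fst (rob S) X (rd0 S) (rs0 S) (rob S) (rd1 S) (rob R) (rd0 R) gg (rs0 R) HSs); auto.
  - apply pb_intro.
    + symmetry; exact Gg0.
    + intros T q1 q2 Hq.
      destruct (eq_trans_el FC S HS T q1 q2 Hq) as [c [C0 C1]].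
      destruct (pb_ex HK T q1 c) as [u [U1 U2]]. { auto. }
      exists u. split; auto. apply JS; ra.
      * rewrite (rwr Gg0); ra; rewrite U1. auto.
      * rewrite (rwr Gg1); ra; rewrite U2. auto.
    + intros T u v H1 H2. apply (pb_jm HK); auto. apply JS.
      * rewrite !asc, <- (pb_comm HK), <- !asc, H1. auto.
      * rewrite !asc, <- Gg1, <- !asc, H2. auto.
  - apply JS; ra.
    + rewrite (rwr Gg0); ra; rewrite ?K0, ?(rwr (eq_r0 S HS)); ra; auto.
    + rewrite (rwr Gg1); ra; rewrite ?K1, ?(rwr (eq_r1 S HS)); ra; auto.
Qed.

Lemma cart_centralize_d0 {X : C} (S : RRel X) RX RY Rf Rs :
  IsReflRel S -> IsCartEq (rd0 S) (rs0 S) RX RY Rf Rs -> Centralize RY S.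
Proof.
  intros [JS [S0 S1]] [HX [HY [FS [F0 [F1 [Sa [Sb [Fr [Sr [Pb0 Pb1]]]]]]]]]].
  intros P p1 p2 HP.
  destruct (pb_ex Pb1 P p2 p1) as [xi [Xi1 Xi2]]. { symmetry; exact (pb_comm HP). }
  exists (rd1 S ∘ (rd0 RX ∘ xi)). split.
  - intros u U1 U2. assert (E : xi ∘ u = Rs).
    { apply (pb_jm Pb1); ra; rewrite ?(rwr Xi1), ?(rwr Xi2), ?U1, ?U2; auto. }
    ra. rewrite E, Sa, (rwr S1). ra. auto.
  - intros v V1 V2. assert (E : xi ∘ v = rs0 RX).
    { apply (pb_jm Pb1); ra; rewrite ?(rwr Xi1), ?(rwr Xi2), ?V1, ?V2, ?Fr; auto.
      rewrite (eq_r1 RX HX). auto. }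
    ra. rewrite E, (eq_r0 RX HX), idr. auto.
Qed.

Lemma cart_from_centr {X : C} (S R : RRel X) : SigmaEquivRel Sigma S ->
  IsEquivRel R -> Centralize R S ->
  exists RX Rf Rs, IsCartEq (rd0 S) (rs0 S) RX R Rf Rs.
Proof.
  intros [HS HSs] HR Hc. pose proof (proj1 HS) as HSr.
  pose proof (eq_jm S HS) as JS. pose proof (eq_jm R HR) as JR.
  destruct (eq_sym R HR) as [sg [G0 G1]].
  destruct (pb_get FC (rd1 R) (rd0 S)) as [P [p1 [p2 HP]]].
  destruct (Hc P p1 p2 HP) as [p [HpR HpS]].
  destruct (theta_ex Sigma FC MS R S P p1 p2 p HR HSr HSs HP HpR HpS) as [th [T0 T1]].
  pose proof (th_sR R S P p1 p2 p HSr HpR th T0 T1) as ThR.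
  pose proof (th_sS R S P p1 p2 p HR HSr HpS th T0 T1) as ThS.
  pose proof (connD Sigma FC MS R S P p1 p2 p HR HSr HSs HP HpR HpS th T0 T1 sg G0 G1) as CD.
  pose proof (connE Sigma FC MS R S P p1 p2 p HR HSr HSs HP HpR HpS th T0 T1) as CE.
  destruct (pb_get FC (rd0 S) (rd0 R)) as [Q [q1 [q2 HQ]]].
  pose proof (pb_comm HQ) as CQ.
  destruct (pb_ex HP Q (sg ∘ q2) q1) as [k [K1 K2]].
  { rewrite asc, G1, CQ. auto. }
  pose proof (sg_sg R sg JR G0 G1) as SS.
  pose proof (sg_s0 R sg (proj1 HR) G0 G1) as SZ.
  pose proof (eq_r0 S HS) as S0. pose proof (eq_r1 S HS) as S1.
  pose proof (eq_r0 R HR) as R0. pose proof (eq_r1 R HR) as R1.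
  destruct (pb_ex HQ (rob S) (idm _) (rs0 R ∘ rd0 S)) as [r0 [r0a r0b]].
  { rewrite asc, R0, idl, idr. auto. }
  destruct (pb_ex HQ (rob R) (rs0 S ∘ rd0 R) (idm _)) as [Rs [Rsa Rsb]].
  { rewrite asc, S0, idl, idr. auto. }
  assert (Aa : rd0 S ∘ (th ∘ k) = rd1 R ∘ q2).
  { rewrite asc, T0, <- asc, K1, asc, G0. auto. }
  exists (mkRRel _ Q q1 (th ∘ k) r0), q2, Rs.
  apply (act_cart FC (rd0 S) (rs0 S) S0 R HR sg G0 G1 Q q1 q2 HQ (th ∘ k) Aa); auto.
  - intros u U1 U2. ra. apply ThS.
    + rewrite (rwr K1); ra; rewrite U2, asc, SZ. auto.
    + rewrite (rwr K2), U1. auto.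
  - intros u U1 U2. destruct (sigR_ex R S P p1 p2 HSr HP) as [a [A1 A2]].
    assert (E : k ∘ u = a ∘ sg).
    { apply (pb_jm HP); ra; rewrite ?(rwr K1), ?(rwr K2), ?(rwr A1), ?(rwr A2); ra;
      rewrite ?U1, ?U2, ?G1; ra; auto. }
    apply JS; ra.
    + rewrite (rwr T0), E. ra. rewrite (rwr A1). ra. rewrite G0, (rwr S0). ra. auto.
    + rewrite (rwr T1), E, asc, HpR, G0; auto. rewrite (rwr S1). ra. auto.
  - intros T x y Y1 Y2. apply JS; ra.
    + rewrite (rwr T0); ra; rewrite (rwr K1); ra; rewrite Y2; ra; rewrite (rwr SS); ra.
      rewrite (rwr CQ). ra. auto.
    + rewrite (rwr T1). rewrite (CD T (k ∘ x) (k ∘ y)); ra.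
      * rewrite (rwr K2). auto.
      * rewrite (rwr K1); ra; rewrite (rwr K1); ra; rewrite Y2. auto.
      * rewrite (rwr K2), Y1. ra. auto.
  - intros T x y z r Hxy Hz1 Hz2 Hr0 Hr1.
    assert (Ey : rd0 R ∘ (q2 ∘ y) = rd1 R ∘ (q2 ∘ x)).
    { rewrite (asc (rd0 R)), <- CQ; ra; rewrite <- Hxy; ra; rewrite (rwr3 Aa); ra; auto. }
    apply JS; ra.
    + rewrite !(rwr T0); ra; rewrite !(rwr K1); ra; rewrite Hz2, !(rwr G0), Hr1. auto.
    + rewrite !(rwr T1). symmetry.
      apply (CE T (sg ∘ (q2 ∘ y)) (sg ∘ (q2 ∘ x)) (sg ∘ r) (q1 ∘ x) (k ∘ x) (k ∘ y) (k ∘ z));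
        ra; rewrite ?(rwr K1), ?(rwr K2); ra; rewrite ?(rwr G0), ?(rwr G1), ?Hz1, ?Hz2; ra; auto.
      rewrite <- Hxy. ra. auto.
Qed.

Lemma fwd : ActionDistinctive Sigma ->
  forall (X : C) (S : RRel X), SigmaEquivRel Sigma S -> HasCentralizer S.
Proof.
  intros AD X S HS.
  destruct (AD _ _ _ _ (special_d0 S HS)) as [RX [RY [Rf [Rs [Hc Hmax]]]]].
  exists RY. split; [exact (proj1 (proj2 Hc))|]. split.
  - exact (cart_centralize_d0 S RX RY Rf Rs (proj1 (proj1 HS)) Hc).
  - intros R' HR' Hc'. destruct (cart_from_centr S R' HS HR' Hc') as [RX' [Rf' [Rs' H']]].
    exact (proj2 (Hmax _ _ _ _ H')).
Qed.

End Fwd.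

Section Aux.
Context {C : Category}.
Hypothesis FC : @FinitelyComplete C.

Lemma kernel_eq {X Y : C} (f : Hom X Y) : exists K : RRel X, IsKernelRel f K /\ IsEquivRel K.
Proof.
  destruct (pb_get FC f f) as [K0 [k0 [k1 HK]]].
  destruct (pb_ex HK X (idm _) (idm _)) as [kd [D0 D1]]. { auto. }
  exists (mkRRel _ K0 k0 k1 kd). cbn [rob rd0 rd1 rs0].
  split; [split; auto|].
  split; [split; [intros T u v; apply (pb_jm HK)|auto]|split].
  - destruct (pb_ex HK K0 k1 k0) as [sg [G0 G1]]. { symmetry; exact (pb_comm HK). }
    exists sg; auto.
  - intros P p1 p2 HP. cbn [rob rd0 rd1 rs0] in *.
    apply (pb_ex HK). rewrite asc, (pb_comm HK), <- asc, (pb_comm HP), asc, (pb_comm HK).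
    ra. auto.
Qed.

Lemma pre_rel {X Y : C} (Z : RRel X) (s : Hom Y X) : IsEquivRel Z ->
  exists (RY : RRel Y) (zt : Hom (rob RY) (rob Z)), IsEquivRel RY /\
    rd0 Z ∘ zt = s ∘ rd0 RY /\ rd1 Z ∘ zt = s ∘ rd1 RY /\
    (forall T (z : Hom T (rob Z)) (y y' : Hom T Y), rd0 Z ∘ z = s ∘ y -> rd1 Z ∘ z = s ∘ y' ->
       exists w, rd0 RY ∘ w = y /\ rd1 RY ∘ w = y' /\ zt ∘ w = z).
Proof.
  intros HZ. pose proof (eq_jm Z HZ) as JZ.
  destruct (pb_get FC (rd0 Z) s) as [W1 [a1 [a2 HW1]]].
  destruct (pb_get FC (rd1 Z ∘ a1) s) as [W [b1 [b2 HW]]].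
  assert (mkW : forall T (z : Hom T (rob Z)) (y y' : Hom T Y), rd0 Z ∘ z = s ∘ y -> rd1 Z ∘ z = s ∘ y' ->
       exists w, a2 ∘ (b1 ∘ w) = y /\ b2 ∘ w = y' /\ a1 ∘ (b1 ∘ w) = z).
  { intros T z y y' H0 H1.
    destruct (pb_ex HW1 T z y H0) as [w1 [U1 U2]].
    destruct (pb_ex HW T w1 y') as [w [V1 V2]]. { rewrite <- asc, U1. auto. }
    exists w. rewrite V1, U1, U2. auto. }
  assert (C0 : rd0 Z ∘ (a1 ∘ b1) = s ∘ (a2 ∘ b1)).
  { rewrite !asc, (pb_comm HW1). auto. }
  assert (C1 : rd1 Z ∘ (a1 ∘ b1) = s ∘ b2).
  { rewrite asc. exact (pb_comm HW). }
  assert (JW : forall T (u v : Hom T W), a2 ∘ (b1 ∘ u) = a2 ∘ (b1 ∘ v) -> b2 ∘ u = b2 ∘ v -> u = v).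
  { intros T u v H1 H2. apply (pb_jm HW); auto. apply (pb_jm HW1); auto.
    apply JZ.
    - rewrite !asc, (pb_comm HW1), <- !asc, H1. auto.
    - pose proof (cpR u C1) as E1. pose proof (cpR v C1) as E2. rewrite <- !asc in E1, E2.
      rewrite !asc. rewrite <- !asc, E1, E2, H2. auto. }
  destruct (mkW Y (rs0 Z ∘ s) (idm _) (idm _)) as [r0 [R01 [R02 R03]]].
  { rewrite asc, (eq_r0 Z HZ), idl, idr. auto. }
  { rewrite asc, (eq_r1 Z HZ), idl, idr. auto. }
  exists (mkRRel _ W (a2 ∘ b1) b2 r0), (a1 ∘ b1). cbn [rob rd0 rd1 rs0].
  split; [|split; [exact C0|split; [exact C1|]]].
  - unfold IsEquivRel, IsReflRel, JointlyMonic; cbn [rob rd0 rd1 rs0]. split; [split; [|split]|split].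
    + intros T u v H1 H2. cbn [rob rd0 rd1 rs0] in H1, H2. rewrite <- !asc in H1. apply JW; auto.
    + ra. exact R01.
    + exact R02.
    + destruct (eq_sym Z HZ) as [sg [G0 G1]].
      destruct (mkW W (sg ∘ (a1 ∘ b1)) b2 (a2 ∘ b1)) as [w [W1' [W2' W3']]].
      { rewrite asc, G0, C1. auto. }
      { rewrite asc, G1, C0. auto. }
      exists w. ra. auto.
    + intros P p1 p2 HP. cbn [rob rd0 rd1 rs0] in *.
      destruct (eq_trans_el FC Z HZ P (a1 ∘ (b1 ∘ p1)) (a1 ∘ (b1 ∘ p2))) as [c [Cc0 Cc1]].
      { rewrite (rwr3 C1), (rwr3 C0). ra. rewrite (pb_comm HP). ra. auto. }
      destruct (mkW P c (a2 ∘ (b1 ∘ p1)) (b2 ∘ p2)) as [w [W1' [W2' W3']]].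
      { rewrite Cc0, (rwr3 C0). ra. auto. }
      { rewrite Cc1, (rwr3 C1). ra. auto. }
      exists w. ra. auto.
  - intros T z y y' H0 H1. destruct (mkW T z y y' H0 H1) as [w [E1 [E2 E3]]].
    exists w. ra. auto.
Qed.

End Aux.

Section Bwd.
Context {C : Category} (Sigma : @SplitClass C).
Hypothesis FC : @FinitelyComplete C.
Hypothesis MS : SigmaMaltsev Sigma.

Lemma cartK {X Y : C} (f : Hom X Y) (s : Hom Y X) RX RY Rf Rs (K : RRel X) :
  IsCartEq f s RX RY Rf Rs -> IsKernelRel f K ->
  forall P (p1 : Hom P (rob RX)) (p2 : Hom P (rob K)), IsPullback (rd1 RX) (rd0 K) P p1 p2 ->
  exists eta : Hom P (rob RX), rd1 RX ∘ eta = rd1 K ∘ p2 /\ Rf ∘ eta = Rf ∘ p1 /\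
   (forall w, p1 ∘ w = idm _ -> p2 ∘ w = rs0 K ∘ rd1 RX -> eta ∘ w = idm _) /\
   (forall w, p1 ∘ w = rs0 RX ∘ rd0 K -> p2 ∘ w = idm _ -> eta ∘ w = rs0 RX ∘ rd1 K).
Proof.
  intros [HX [HY [FS [F0 [F1 [Sa [Sb [Fr [Sr [Pb0 Pb1]]]]]]]]]] [HK [K0 K1]] P p1 p2 HP.
  pose proof (pb_comm HK) as KC.
  destruct (pb_ex Pb1 P (rd1 K ∘ p2) (Rf ∘ p1)) as [eta [E1 E2]].
  { rewrite asc, <- KC, <- asc, <- (pb_comm HP), asc, <- F1. ra. auto. }
  exists eta. split; auto. split; auto. split.
  - intros w W1 W2. apply (pb_jm Pb1); ra; rewrite ?(rwr E1), ?(rwr E2); ra;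
      rewrite ?W1, ?W2; ra; rewrite ?(rwr K1); ra; auto.
  - intros w W1 W2. apply (pb_jm Pb1); ra; rewrite ?(rwr E1), ?(rwr E2); ra;
      rewrite ?W1, ?W2; ra; rewrite ?(rwr (eq_r1 RX HX)); ra; auto.
    rewrite (rwr Fr), (rwr Fr). ra. rewrite KC. auto.
Qed.

Lemma cart_centr_K {X Y : C} (f : Hom X Y) (s : Hom Y X) RX RY Rf Rs (K : RRel X) :
  IsCartEq f s RX RY Rf Rs -> IsKernelRel f K -> Centralize RX K.
Proof.
  intros Hc HK P p1 p2 HP. destruct (cartK f s RX RY Rf Rs K Hc HK P p1 p2 HP) as [eta [E1 [E2 [E3 E4]]]].
  pose proof (proj1 Hc) as HX.
  exists (rd0 RX ∘ eta). split.
  - intros u U1 U2. ra. rewrite E3; auto. ra. auto.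
  - intros v V1 V2. ra. rewrite E4; auto. rewrite (rwr (eq_r0 RX HX)). ra. auto.
Qed.


Lemma bwd : (forall (X : C) (S : RRel X), SigmaEquivRel Sigma S -> HasCentralizer S) ->
  ActionDistinctive Sigma.
Proof.
  intros HC X Y f s [Hfs Hsp].
  destruct (kernel_eq FC f) as [K [HKk HKe]].
  destruct (Hsp K HKk) as [HKr HKs].
  destruct (HC X K (conj HKe HKs)) as [Z [HZ [HZc HZmax]]].
  pose proof (proj1 HKk) as HKpb. pose proof (pb_comm HKpb) as KC.
  pose proof (eq_jm K HKe) as JK. pose proof (eq_jm Z HZ) as JZ.
  destruct (pb_get FC (rd1 Z) (rd0 K)) as [P [p1 [p2 HP]]].
  destruct (HZc P p1 p2 HP) as [p [HpR HpS]].
  destruct (theta_ex Sigma FC MS Z K P p1 p2 p HZ HKr HKs HP HpR HpS) as [th [T0 T1]].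
  destruct (eq_sym Z HZ) as [sgZ [G0 G1]].
  pose proof (connD Sigma FC MS Z K P p1 p2 p HZ HKr HKs HP HpR HpS th T0 T1 sgZ G0 G1) as CD.
  pose proof (connE Sigma FC MS Z K P p1 p2 p HZ HKr HKs HP HpR HpS th T0 T1) as CE.
  pose proof (sg_sg Z sgZ JZ G0 G1) as SSZ.
  pose proof (sg_s0 Z sgZ (proj1 HZ) G0 G1) as SZ0.
  destruct (pre_rel FC Z s HZ) as [RY [zt [HRY [Z0 [Z1 mkW]]]]].
  destruct (eq_sym RY HRY) as [sgY [H0 H1]].
  pose proof (eq_jm RY HRY) as JY.
  assert (ZS : zt ∘ sgY = sgZ ∘ zt).
  { apply JZ; ra; rewrite ?(rwr Z0), ?(rwr Z1), ?(rwr G0), ?(rwr G1); ra;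
    rewrite ?H0, ?H1, ?Z0, ?Z1; auto. }
  assert (ZR : zt ∘ rs0 RY = rs0 Z ∘ s).
  { apply JZ; ra; rewrite ?(rwr Z0), ?(rwr Z1), ?(rwr (eq_r0 Z HZ)), ?(rwr (eq_r1 Z HZ)); ra;
    rewrite ?(eq_r0 RY HRY), ?(eq_r1 RY HRY); ra; auto. }
  destruct (pb_get FC f (rd0 RY)) as [Q [q1 [q2 HQ]]].
  pose proof (pb_comm HQ) as CQ.
  destruct (pb_ex HKpb Q (s ∘ (f ∘ q1)) q1) as [ka [Ka0 Ka1]].
  { rewrite asc, Hfs, idl. auto. }
  destruct (pb_ex HP Q (sgZ ∘ (zt ∘ q2)) ka) as [kk [KK1 KK2]].
  { rewrite asc, G1, (rwr Z0), Ka0. ra. rewrite CQ. auto. }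
  set (al := p ∘ kk).
  assert (Aa : f ∘ al = rd1 RY ∘ q2).
  { unfold al. rewrite <- T1. ra. rewrite (asc f (rd1 K)), <- KC. ra.
    rewrite (rwr T0). ra. rewrite KK1, (rwr G0), (rwr Z1). ra. rewrite (rwr Hfs). ra. auto. }
  assert (Hkt : forall T (x y : Hom T Q), q1 ∘ y = al ∘ x -> ka ∘ y = th ∘ (kk ∘ x)).
  { intros T x y Hy. apply JK; ra.
    - rewrite (rwr Ka0), (rwr T0); ra; rewrite Hy, (rwr Aa); ra; rewrite (rwr KK1); ra;
      rewrite (rwr G0), (rwr Z1); ra; auto.
    - rewrite (rwr Ka1), (rwr T1); ra; rewrite Hy. unfold al. ra. auto. }
  destruct (pb_ex HQ X (idm _) (rs0 RY ∘ f)) as [r0 [r0a r0b]].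
  { rewrite asc, (eq_r0 RY HRY), idl, idr. auto. }
  destruct (pb_ex HQ (rob RY) (s ∘ rd0 RY) (idm _)) as [Rs [Rsa Rsb]].
  { rewrite asc, Hfs, idl, idr. auto. }
  destruct (sigR_ex Z K P p1 p2 HKr HP) as [a [A1 A2]].
  destruct (sigS_ex Z K P p1 p2 HZ HP) as [b [B1 B2]].
  assert (Hcart : IsCartEq f s (mkRRel _ Q q1 al r0) RY q2 Rs).
  { apply (act_cart FC f s Hfs RY HRY sgY H0 H1 Q q1 q2 HQ al Aa); auto.
    - intros u U1 U2. unfold al.
      assert (E : kk ∘ u = b ∘ (ka ∘ u)).
      { apply (pb_jm HP); ra; rewrite ?(rwr KK1), ?(rwr KK2), ?(rwr B1), ?(rwr B2); ra; auto.
        rewrite U2; ra; rewrite (rwr ZR); ra; rewrite (rwr SZ0); ra; rewrite (rwr Ka0); ra; rewrite U1; ra; auto. }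
      ra. rewrite E, (asc p b), HpS; auto. rewrite (rwr Ka1), U1. auto.
    - intros u U1 U2. unfold al.
      assert (E : kk ∘ u = a ∘ (sgZ ∘ zt)).
      { apply (pb_jm HP); ra; rewrite ?(rwr KK1), ?(rwr KK2), ?(rwr A1), ?(rwr A2); ra;
          rewrite ?U2; ra; auto.
        apply JK; ra; rewrite ?(rwr Ka0), ?(rwr Ka1), ?(rwr (proj1 (proj2 HKr))),
          ?(rwr (proj2 (proj2 HKr))); ra; rewrite ?(rwr G1), ?U1, ?Z0; ra; auto.
        rewrite (rwr Hfs). ra. auto. }
      ra. rewrite E, (asc p a), HpR, (rwr G0), Z1; auto.
    - intros T x y Y1 Y2. unfold al. ra.
      rewrite (CD T (kk ∘ x) (kk ∘ y)); ra.
      + rewrite (rwr KK2), (rwr Ka1). auto.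
      + rewrite !(rwr KK1); ra; rewrite Y2; ra; rewrite (rwr ZS); ra; auto.
      + rewrite (rwr KK2). apply Hkt. exact Y1.
    - intros T x y z r Hxy Hz1 Hz2 Hr0 Hr1. unfold al. ra. symmetry.
      assert (Ey : rd0 RY ∘ (q2 ∘ y) = rd1 RY ∘ (q2 ∘ x)).
      { rewrite (asc (rd0 RY)), <- CQ; ra; rewrite <- Hxy, (rwr Aa); ra; auto. }
      apply (CE T (sgZ ∘ (zt ∘ (q2 ∘ y))) (sgZ ∘ (zt ∘ (q2 ∘ x))) (sgZ ∘ (zt ∘ r)) (ka ∘ x)
               (kk ∘ x) (kk ∘ y) (kk ∘ z));
        ra; rewrite ?(rwr KK1), ?(rwr KK2); ra; rewrite ?(rwr G0), ?(rwr G1); ra;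
        rewrite ?(rwr Z0), ?(rwr Z1), ?Hz2; ra; rewrite ?Ey, ?Hr0, ?Hr1; auto.
      apply JK; ra; rewrite ?(rwr Ka0), ?(rwr Ka1); ra; rewrite ?Hz1; auto. }
  exists (mkRRel _ Q q1 al r0), RY, q2, Rs. split; [exact Hcart|].
  intros RX' RY' Rf' Rs' Hc'.
  pose proof Hc' as [HX' [HY' [FS [F0 [F1 [Sa [Sb [Fr [Sr [Pb0 Pb1]]]]]]]]]].
  destruct (HZmax RX' HX' (cart_centr_K f s RX' RY' Rf' Rs' K Hc' HKk)) as [h [Hh0 Hh1]].
  destruct (mkW _ (h ∘ Rs') (rd0 RY') (rd1 RY')) as [j [J0 [J1 J2]]].
  { rewrite asc, Hh0, Sa. auto. }
  { rewrite asc, Hh1, Sb. auto. }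
  split; [|exists j; auto].
  destruct (pb_ex HQ (rob RX') (rd0 RX') (j ∘ Rf')) as [m [M1 M2]].
  { rewrite asc, J0, F0. auto. }
  exists m. cbn [rob rd0 rd1 rs0]. split; [exact M1|].
  destruct (eq_sym RX' HX') as [sgX [X0 X1]].
  destruct (eq_sym RY' HY') as [sgY' [Y0 Y1]].
  destruct (pb_get FC (rd1 RX') (rd0 K)) as [P' [p1' [p2' HP']]].
  destruct (cartK f s RX' RY' Rf' Rs' K Hc' HKk P' p1' p2' HP') as [eta [E1 [E2 [E3 E4]]]].
  destruct (pb_ex HP P' (h ∘ p1') p2') as [hh [HH1 HH2]].
  { rewrite asc, Hh1. exact (pb_comm HP'). }
  assert (Main : p ∘ hh = rd0 RX' ∘ eta).
  { apply (conn_epi Sigma FC MS RX' K P' p1' p2' HX' HKr HKs HP').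
    - intros w W1 W2.
      assert (E : hh ∘ w = a ∘ h).
      { apply (pb_jm HP); ra; rewrite ?(rwr HH1), ?(rwr HH2), ?(rwr A1), ?(rwr A2); ra;
          rewrite ?W1, ?W2; ra; rewrite ?Hh1; auto. }
      ra. rewrite E, E3, (asc p a), HpR; auto. ra. auto.
    - intros w W1 W2.
      assert (E : hh ∘ w = b).
      { apply (pb_jm HP); ra; rewrite ?(rwr HH1), ?(rwr HH2), ?B1, ?B2; ra;
          rewrite ?W1, ?W2; ra; auto.
        assert (Hr : h ∘ rs0 RX' = rs0 Z).
        { apply JZ; ra; rewrite ?(rwr Hh0), ?(rwr Hh1); ra;
          rewrite ?(eq_r0 RX' HX'), ?(eq_r1 RX' HX'), ?(eq_r0 Z HZ), ?(eq_r1 Z HZ); auto. }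
        rewrite asc, Hr. auto. }
      ra. rewrite E, HpS, E4; auto. rewrite (rwr (eq_r0 RX' HX')). ra. auto. }
  destruct (pb_ex HP' (rob RX') (sgX ∘ (Rs' ∘ Rf')) (ka ∘ m)) as [e [Ee1 Ee2]].
  { rewrite asc, X1, asc, Sa, (rwr Ka0); ra; rewrite M1, F0. auto. }
  assert (Ek : kk ∘ m = hh ∘ e).
  { apply (pb_jm HP); ra; rewrite ?(rwr KK1), ?(rwr KK2), ?(rwr HH1), ?(rwr HH2); ra;
      rewrite ?M2, ?Ee1, ?Ee2; auto.
    rewrite (rwr J2). ra. rewrite asc.
    assert (sgZ ∘ h = h ∘ sgX) as ->; [|ra; auto].
    apply JZ; ra; rewrite ?(rwr G0), ?(rwr G1), ?(rwr Hh0), ?(rwr Hh1), ?Hh0, ?Hh1, ?X0, ?X1;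
      auto. }
  assert (Ee : eta ∘ e = sgX).
  { apply (pb_jm Pb1); ra; rewrite ?(rwr E1), ?(rwr E2); ra; rewrite ?Ee1, ?Ee2, ?X1; ra.
    - rewrite (rwr Ka1), M1. auto.
    - assert (RS : Rf' ∘ sgX = sgY' ∘ Rf').
      { apply (eq_jm RY' HY'); ra; rewrite ?(rwr F0), ?(rwr F1), ?(rwr Y0), ?(rwr Y1); ra;
          rewrite ?X0, ?X1, ?F0, ?F1; auto. }
      rewrite (rwr RS); ra; rewrite (rwr FS); ra; rewrite RS. auto. }
  cbn [rob rd0 rd1 rs0]. unfold al. ra. rewrite Ek, (asc p hh), Main. ra. rewrite Ee, X0. auto.
Qed.

End Bwd.

Theorem theorem5p5 (C : Category) (Sigma : @SplitClass C) :
  @FinitelyComplete C -> Fibrational Sigma -> SigmaMaltsev Sigma ->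
  (ActionDistinctive Sigma <->
   forall (X : C) (S : RRel X), SigmaEquivRel Sigma S -> HasCentralizer S).
Proof.
  intros FC Fib MS. split.
  - exact (fwd Sigma FC Fib MS).
  - exact (bwd Sigma FC MS).
Qed.
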